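(* Let $A$ be an integral domain with a non-trivial $\mathbb{Z}$-grading and let $\alpha$ be a nonzero homogeneous element of $A$. Then there exist homogeneous elements $f\in\alpha A\setminus\{0\}$ and $w\in A_f^*$ such that $A_f=(A_f)_0[w,w^{-1}]$, and this ring is isomorphic to the Laurent polynomial ring in one variable over $(A_f)_0$.
   Context: $A_f$ is the localization of $A$ at the powers of $f$, with the $\mathbb{Z}$-grading extended from $A$; $(A_f)_0$ is its subring of degree-zero elements. *)

(* Defs.v *)
From HB Require Import structures.
From mathcomp Require Import all_boot all_order all_algebra.
Set Implicit Arguments. Unset Strict Implicit. Unset Printing Implicit Defensive.
Import Order.TTheory GRing.Theory Num.Theory.
Local Open Scope ring_scope.

(* A Z-grading of a commutative ring A: a family (A_d)_{d : int} of additive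
   subgroups with A_d * A_e ⊆ A_{d+e} and A = ⊕_d A_d (internal direct sum). *)
Definition Zgrading (A : comNzRingType) (G : int -> {pred A}) : Prop :=
  [/\ (forall d, GRing.zmod_closed (G d)),
      (forall d e a b, a \in G d -> b \in G e -> a * b \in G (d + e)),
      (forall a : A, exists (s : seq int) (x : int -> A),
          (forall d, x d \in G d) /\ a = \sum_(d <- s) x d)
    & (forall (s : seq int) (x : int -> A), uniq s ->
          (forall d, x d \in G d) -> \sum_(d <- s) x d = 0 ->
          forall d, d \in s -> x d = 0)].

Definition nontrivial_grading (A : comNzRingType) (G : int -> {pred A}) : Prop :=
  exists d : int, d != 0 /\ exists a, a \in G d /\ a != 0.

Definition homogeneous (A : comNzRingType) (G : int -> {pred A}) (a : A) : Prop :=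
  exists d, a \in G d.

(* For an integral domain A and f in A, f <> 0, the localization A_f is
   realised as the subring A[1/f] of the fraction field {fraction A}. *)
Definition loc (A : idomainType) (f : A) (x : {fraction A}) : Prop :=
  exists (a : A) (n : nat), x = tofrac a / (tofrac f) ^+ n.

Definition loc_hom (A : idomainType) (G : int -> {pred A}) (f : A) (k : int)
    (x : {fraction A}) : Prop :=
  exists d : int, f \in G d /\
  exists (a : A) (n : nat), a \in G (k + n%:Z * d) /\ x = tofrac a / (tofrac f) ^+ n.

Definition loc0 (A : idomainType) (G : int -> {pred A}) (f : A) :=
  loc_hom G f 0.

(* Main.v *)
Require Import Defs.
From HB Require Import structures.
From mathcomp Require Import all_boot all_order all_algebra.
From mathcomp Require Import ring lra zify.
From Stdlib Require Import Classical.
Set Implicit Arguments. Unset Strict Implicit. Unset Printing Implicit Defensive.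
Import Order.TTheory GRing.Theory Num.Theory.
Local Open Scope ring_scope.

Section Grading.
Variables (A : idomainType) (G : int -> {pred A}).
Hypothesis HG : Zgrading G.

Lemma G0 d : 0 \in G d.
Proof. by case: HG => /(_ d) [] . Qed.

Lemma GB d a b : a \in G d -> b \in G d -> a - b \in G d.
Proof. by case: HG => /(_ d) [] _ H _ _ _ Ha Hb; apply: H. Qed.

Lemma GN d a : a \in G d -> - a \in G d.
Proof. by move=> Ha; rewrite -sub0r; apply: GB => //; apply: G0. Qed.

Lemma GD d a b : a \in G d -> b \in G d -> a + b \in G d.
Proof. by move=> Ha Hb; rewrite -[b]opprK; apply: GB => //; apply: GN. Qed.

Lemma GM d e a b : a \in G d -> b \in G e -> a * b \in G (d + e).
Proof. by case: HG => _ H _ _; apply: H. Qed.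

Lemma Geq d d' a : a \in G d -> d = d' -> a \in G d'.
Proof. by move=> H <-. Qed.

Lemma GX d e a h n : a \in G d -> h \in G e -> a * h ^+ n \in G (d + n%:Z * e).
Proof.
move=> Ha Hh; elim: n => [|n IH]; first by rewrite expr0 mulr1 mul0r addr0.
rewrite exprS mulrA (mulrC a) -mulrA mulrC.
apply: Geq; first by apply: GM IH Hh.
rewrite -[n.+1]addn1 PoszD; ring.
Qed.

Lemma Gsum (I : Type) (r : seq I) (P : pred I) (F : I -> A) d :
  (forall i, P i -> F i \in G d) -> \sum_(i <- r | P i) F i \in G d.
Proof.
move=> H; elim/big_ind: _ => //; [exact: G0 | exact: GD].
Qed.

Lemma dsum0 (M : nat) (t : 'I_M -> A) (g : 'I_M -> int) :
  injective g -> (forall i, t i \in G (g i)) -> \sum_i t i = 0 -> forall i, t i = 0.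
Proof.
move=> ginj Ht Hs i.
case: HG => _ _ _ /(_ [seq g j | j <- enum 'I_M] (fun d => \sum_(j | g j == d) t j)).
have xg : forall j, \sum_(k | g k == g j) t k = t j.
  move=> j; rewrite (eq_bigl (fun k => k == j)); first by rewrite big_pred1_eq.
  by move=> k; rewrite inj_eq.
move=> /(_ _ _ _ (g i)); rewrite xg; apply.
- by rewrite map_inj_uniq ?enum_uniq.
- move=> d; apply: Gsum => k /eqP <-; exact: Ht.
- by rewrite big_map big_enum /=; under eq_bigr => j _ do rewrite xg.
- by apply: map_f; rewrite mem_enum.
Qed.

Lemma deg_uniq f d d' : f != 0 -> f \in G d -> f \in G d' -> d = d'.
Proof.
move=> f0 Hd Hd'; apply/eqP; apply/negPn/negP => dd.
case: HG => _ _ _ /(_ [:: d; d'] (fun k => if k == d then f else if k == d' then - f else 0)).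
move=> /(_ _ _ _ d); rewrite eqxx => H.
move/eqP: f0; apply; apply: H.
- by rewrite /= inE dd.
- move=> k; case: eqP => [->//|_]; case: eqP => [->|_]; [exact: GN | exact: G0].
- by rewrite big_cons big_cons big_nil eqxx eq_sym (negbTE dd) eqxx addr0 subrr.
- by rewrite inE eqxx.
Qed.


Lemma min_ex (P : nat -> Prop) : (exists n, P n) -> exists n, P n /\ forall m, P m -> (n <= m)%N.
Proof.
move=> [n Pn]; apply: NNPP => Hno.
suff: forall k, forall n, (n <= k)%N -> ~ P n by move/(_ n n (leqnn n)).
elim=> [|k IH] m Hm Pm.
  apply: Hno; exists m; split=> // j _; move: Hm; rewrite leqn0 => /eqP ->; done.
apply: Hno; exists m; split=> // j Pj; rewrite leqNgt; apply/negP => jm.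
by apply: (IH j) => //; rewrite -ltnS (leq_trans jm Hm).
Qed.

Definition Sdeg d := exists b, b \in G d /\ b != 0.
Definition Ddeg (x : int) := exists d1 d2, [/\ Sdeg d1, Sdeg d2 & x = d1 - d2].

Lemma SD d e : Sdeg d -> Sdeg e -> Sdeg (d + e).
Proof. by move=> [a [Ha a0]] [b [Hb b0]]; exists (a * b); rewrite GM // mulf_neq0. Qed.

Lemma DD x y : Ddeg x -> Ddeg y -> Ddeg (x + y).
Proof.
move=> [a1 [a2 [S1 S2 ->]]] [b1 [b2 [T1 T2 ->]]].
exists (a1 + b1), (a2 + b2); split; try exact: SD; ring.
Qed.

Lemma DN x : Ddeg x -> Ddeg (- x).
Proof. move=> [a1 [a2 [S1 S2 ->]]]; exists a2, a1; split=> //; ring. Qed.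

Lemma DS d : Sdeg d -> Ddeg d.
Proof. move=> Sd; exists (d + d), d; split=> //; [exact: SD | ring]. Qed.

Lemma exists_e : nontrivial_grading G ->
  exists (e d1 d2 : int) (g1 g2 : A),
    [/\ 0 < e, e = d1 - d2, g1 \in G d1 /\ g1 != 0, g2 \in G d2 /\ g2 != 0
      & forall x, Ddeg x -> x = (x %/ e)%Z * e].
Proof.
move=> [d [d0 [a [Ha a0]]]].
have Sd : Sdeg d by exists a.
have D0 : Ddeg 0 by exists d, d; split=> //; rewrite subrr.
have [n [[n0 Dn] nmin]] : exists n, ((0 < n)%N /\ Ddeg n%:Z) /\
      forall m, ((0 < m)%N /\ Ddeg m%:Z) -> (n <= m)%N.
  apply: min_ex; exists `|d|%N; split; first by rewrite absz_gt0.
  rewrite abszE; have [dp|dn] := lerP 0 d.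
    by rewrite ger0_norm //; apply: DS.
  by rewrite ltr0_norm //; apply/DN/DS.
move: Dn => [d1 [d2 [[g1 [H1 g10]] [g2 [H2 g20]] Ed]]].
have npos : 0 < n%:Z by rewrite ltz_nat.
exists n%:Z, d1, d2, g1, g2; split=> //.
move=> x Dx.
have Dm : forall k : nat, Ddeg (k%:Z * n%:Z).
  elim=> [|k IH]; first by rewrite mul0r.
  have -> : (k.+1)%:Z * n%:Z = k%:Z * n%:Z + n%:Z by rewrite -addn1 PoszD; ring.
  apply: DD => //; exists d1, d2; split=> //; [by exists g1 | by exists g2].
have Dq : forall q : int, Ddeg (q * n%:Z).
  by case=> k; [apply: Dm | rewrite NegzE mulNr; apply/DN/Dm].
have Dr : Ddeg (x %% n%:Z)%Z.
  have -> : (x %% n%:Z)%Z = x + - ((x %/ n%:Z)%Z * n%:Z) by rewrite {2}(divz_eq x n%:Z); ring.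
  by apply: DD => //; apply/DN/Dq.
have n0' : n%:Z != 0 by rewrite eqz_nat -lt0n.
have r0 := modz_ge0 x n0'.
have rn := ltz_pmod x npos.
suff r00 : (x %% n%:Z)%Z = 0 by rewrite {1}(divz_eq x n%:Z) r00 addr0.
move: Dr r0 rn; case: (x %% n%:Z)%Z => [[|r]|r] //= Dr _ rn.
have := nmin r.+1 (conj (ltn0Sn r) Dr); move: rn; rewrite ltz_nat; lia.
Qed.

End Grading.
Section Gen.
Variable K : fieldType.
Implicit Types a b X Y F : K.

Lemma genD a b X Y : X != 0 -> Y != 0 -> a / X + b / Y = (a * Y + b * X) / (X * Y).
Proof. by move=> *; field; apply/andP. Qed.

Lemma genPos (a g1 g2 b : K) (n k : nat) : a != 0 -> g1 != 0 -> g2 != 0 ->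
  b / (a*(g1*g2))^+n = (b * (a*(g2*g2))^+k) / (a*(g1*g2))^+(n+k) * (g1/g2)^+k.
Proof. move=> *; rewrite exprD !exprMn ?exprVn; field; rewrite !expf_neq0 //. Qed.

Lemma genNeg (a g1 g2 b : K) (n k : nat) : a != 0 -> g1 != 0 -> g2 != 0 ->
  b / (a*(g1*g2))^+n = (b * (a*(g1*g1))^+k) / (a*(g1*g2))^+(n+k) / (g1/g2)^+k.
Proof. move=> *; rewrite exprD !exprMn ?exprVn; field; rewrite !expf_neq0 //. Qed.

Lemma genW (a g1 g2 : K) : a != 0 -> g1 != 0 -> g2 != 0 ->
  g1 / g2 = (a * (g1 * g1)) / (a * (g1 * g2)) ^+ 1.
Proof. by move=> *; rewrite expr1; field; rewrite ?mulf_neq0 //; apply/and3P. Qed.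

Lemma genW' (a g1 g2 : K) : a != 0 -> g1 != 0 -> g2 != 0 ->
  g2 / g1 = (a * (g2 * g2)) / (a * (g1 * g2)) ^+ 1.
Proof. by move=> *; rewrite expr1; field; rewrite ?mulf_neq0 //; apply/and3P. Qed.

Lemma genM a b X Y : X != 0 -> Y != 0 -> a / X * (b / Y) = (a * b) / (X * Y).
Proof. by move=> *; field; apply/andP. Qed.

Lemma genWV (g1 g2 : K) : g1 != 0 -> g2 != 0 -> g1 / g2 * (g2 / g1) = 1.
Proof. by move=> *; field; apply/andP. Qed.

Lemma genInj (a g1 g2 F : K) (n N i M : nat) : g2 != 0 -> F != 0 -> (n <= N)%N -> (i <= M)%N ->
  a / F ^+ n * (g1 / g2) ^+ i * (F ^+ N * g2 ^+ M) = a * F ^+ (N - n) * g1 ^+ i * g2 ^+ (M - i).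
Proof.
move=> g20 F0 nN iM; rewrite -{1}(subnKC nN) -{1}(subnKC iM) !exprD ?exprMn ?exprVn.
field; rewrite !expf_neq0 //.
Qed.

Lemma genFrac (p W : K) (m : nat) : W != 0 -> p / W ^+ m = p * (W^-1) ^+ m.
Proof. by move=> *; rewrite exprVn. Qed.

End Gen.

Local Notation "x %:F" := (tofrac x).

Section Loc.
Variables (A : idomainType) (G : int -> {pred A}).
Hypothesis HG : Zgrading G.
Variables (alpha g1 g2 : A) (da d1 d2 e : int).
Hypotheses (Ha : alpha \in G da) (a0 : alpha != 0) (H1 : g1 \in G d1) (g10 : g1 != 0)
  (H2 : g2 \in G d2) (g20 : g2 != 0) (epos : 0 < e) (Ee : e = d1 - d2)
  (Hmul : forall x, Ddeg G x -> x = (x %/ e)%Z * e).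

Local Notation f := (alpha * (g1 * g2)).
Local Notation df := (da + (d1 + d2)).
Local Notation w := (g1%:F / g2%:F).
Local Notation v := (g2%:F / g1%:F).

Ltac nz := rewrite ?(mulf_eq0, invr_eq0, expf_eq0, tofrac_eq0, negbTE a0, negbTE g10, negbTE g20, andbF, orbF) //.

Lemma Hf : f \in G df.
Proof. by apply: (GM HG) => //; apply: (GM HG). Qed.

Lemma f0 : f != 0.
Proof. by rewrite !mulf_neq0. Qed.

Lemma loc_homE k c : loc_hom G f k c ->
  exists an : A * nat, an.1 \in G (k + an.2%:Z * df) /\ c = an.1%:F / f%:F ^+ an.2.
Proof.
move=> [d [Hd [a [n [Han ->]]]]].
rewrite (deg_uniq HG f0 Hd Hf) in Han; by exists (a, n).
Qed.

Lemma loc0_0 : loc0 G f 0.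
Proof.
exists df; split; first exact: Hf.
by exists 0, 0%N; split; [exact: (G0 HG) | rewrite tofrac0 mul0r].
Qed.

Lemma loc0D c1 c2 : loc0 G f c1 -> loc0 G f c2 -> loc0 G f (c1 + c2).
Proof.
move=> /loc_homE [[a1 n1] [/= Ha1 ->]] /loc_homE [[a2 n2] [/= Ha2 ->]].
exists df; split; first exact: Hf.
exists (a1 * f ^+ n2 + a2 * f ^+ n1), (n1 + n2)%N; split.
  apply: (GD HG).
    apply: Geq; first exact: (GX HG n2 Ha1 Hf).
    rewrite PoszD; ring.
  apply: Geq; first exact: (GX HG n1 Ha2 Hf).
  rewrite PoszD; ring.
rewrite tofracD !tofracM !tofracXn !tofracM exprD; apply: genD; nz.
Qed.

Definition Repr x := exists (p : {poly {fraction A}}) (m : nat),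
  (forall i, loc0 G f p`_i) /\ x = p.[w] / w ^+ m.

Lemma Repr0 : Repr 0.
Proof. exists 0, 0%N; split; first by move=> i; rewrite coef0; exact: loc0_0.
by rewrite horner0 mul0r. Qed.

Lemma ReprD x y : Repr x -> Repr y -> Repr (x + y).
Proof.
move=> [p [m [Hp ->]]] [q [m' [Hq ->]]].
exists (p * 'X^m' + q * 'X^m), (m + m')%N; split.
  move=> i; rewrite coefD !coefMXn; apply: loc0D; case: ifP => _ //; exact: loc0_0.
rewrite hornerD !hornerM !hornerXn exprD; apply: genD; nz.
Qed.

Lemma Repr_hom b d n : b \in G d -> Repr (b%:F / f%:F ^+ n).
Proof.
move=> Hb; have [->|b0] := eqVneq b 0; first by rewrite tofrac0 mul0r; exact: Repr0.
have Sd : Sdeg G d by exists b.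
have Sf : Sdeg G df by exists f; split; [exact: Hf | exact: f0].
have Ed := Hmul (DS HG Sd); have Ef := Hmul (DS HG Sf).
pose k := ((d %/ e)%Z - n%:Z * (df %/ e)%Z).
have Hk : d = n%:Z * df + k * e.
  rewrite /k; move: (d %/ e)%Z (df %/ e)%Z Ed Ef => q1 q2 E1 E2.
  rewrite E1 E2; ring.
case: k Hk => K Hk.
- pose c := (b * (alpha * (g2 * g2)) ^+ K)%:F / f%:F ^+ (n + K).
  exists (c *: 'X^K), 0%N; split.
    move=> i; rewrite coefZ coefXn; case: eqP => _; last by rewrite mulr0; exact: loc0_0.
    rewrite mulr1; exists df; split; first exact: Hf.
    exists (b * (alpha * (g2 * g2)) ^+ K), (n + K)%N; split=> //.
    apply: Geq; first exact: (GX HG K Hb (GM HG Ha (GM HG H2 H2))).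
    rewrite Hk PoszD Ee; ring.
  rewrite hornerZ hornerXn expr0 divr1 /c !tofracM !tofracXn !tofracM; apply: genPos; nz.
- pose c := (b * (alpha * (g1 * g1)) ^+ K.+1)%:F / f%:F ^+ (n + K.+1).
  exists c%:P, K.+1; split.
    move=> i; rewrite coefC; case: eqP => _; last exact: loc0_0.
    exists df; split; first exact: Hf.
    exists (b * (alpha * (g1 * g1)) ^+ K.+1), (n + K.+1)%N; split=> //.
    apply: Geq; first exact: (GX HG K.+1 Hb (GM HG Ha (GM HG H1 H1))).
    rewrite Hk PoszD NegzE Ee; ring.
  rewrite hornerC /c !tofracM !tofracXn !tofracM; apply: genNeg; nz.
Qed.


Lemma locD x y : loc f x -> loc f y -> loc f (x + y).
Proof.
move=> [a [n ->]] [b [m ->]]; exists (a * f ^+ m + b * f ^+ n), (n + m)%N.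
rewrite tofracD !tofracM !tofracXn !tofracM exprD; apply: genD; nz.
Qed.

Lemma locM x y : loc f x -> loc f y -> loc f (x * y).
Proof.
move=> [a [n ->]] [b [m ->]]; exists (a * b), (n + m)%N.
rewrite !tofracM exprD; apply: genM; nz.
Qed.

Lemma loc_0 : loc f 0.
Proof. by exists 0, 0%N; rewrite tofrac0 mul0r. Qed.

Lemma loc_1 : loc f 1.
Proof. by exists 1, 0%N; rewrite tofrac1 expr0 divr1. Qed.

Lemma locX x n : loc f x -> loc f (x ^+ n).
Proof. move=> Hx; elim: n => [|n IH]; [exact: loc_1 | rewrite exprS; exact: locM]. Qed.

Lemma loc0_loc x : loc0 G f x -> loc f x.
Proof. by move=> [d [_ [a [n [_ ->]]]]]; exists a, n. Qed.

Lemma loc_w : loc f w.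
Proof. exists (alpha * (g1 * g1)), 1%N; rewrite !tofracM; apply: genW; nz. Qed.

Lemma loc_v : loc f v.
Proof. exists (alpha * (g2 * g2)), 1%N; rewrite !tofracM; apply: genW'; nz. Qed.

Lemma loc_Repr x : loc f x -> Repr x.
Proof.
move=> [a [n ->]]; case: HG => _ _ /(_ a) [s [xs [Hxs ->]]] _.
rewrite rmorph_sum mulr_suml; elim/big_ind: _ => [|x1 y1|d _].
- exact: Repr0.
- exact: ReprD.
- exact: Repr_hom (Hxs d).
Qed.

Lemma Repr_loc x : Repr x -> loc f x.
Proof.
move=> [p [m [Hp ->]]]; rewrite genFrac; last by nz.
rewrite invf_div; apply: locM; last exact: locX loc_v.
rewrite horner_coef; elim/big_ind: _ => [|x1 y1|i _].
- exact: loc_0.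
- exact: locD.
- apply: locM; [exact: loc0_loc | exact: locX loc_w].
Qed.

Lemma Repr_inj (p : {poly {fraction A}}) : (forall i, loc0 G f p`_i) -> p.[w] = 0 -> p = 0.
Proof.
move=> Hp pw0.
set M := size p.
have [h Hh] := fin_all_exists (fun i : 'I_M => loc_homE (Hp i)).
pose N := (\sum_(i < M) (h i).2)%N.
have nN i : ((h i).2 <= N)%N by rewrite /N (bigD1 i) //= leq_addr.
pose t (i : 'I_M) := (h i).1 * f ^+ (N - (h i).2) * g1 ^+ i * g2 ^+ (M - i).
pose g (i : 'I_M) : int := N%:Z * df + M%:Z * d2 + i%:Z * e.
have Ht i : t i \in G (g i).
  apply: Geq; first exact: (GX HG _ (GX HG _ (GX HG _ (Hh i).1 Hf) H1) H2).
  rewrite /g -(subzn (nN i)) -(subzn (ltnW (ltn_ord i))) Ee; ring.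
have e0 : e != 0 by rewrite gt_eqF.
have ginj : injective g.
  move=> i j /addrI /(mulIf e0) /eqP; rewrite eqz_nat => /eqP; exact: ord_inj.
have sum0 : \sum_i t i = 0.
  apply/eqP; rewrite -tofrac_eq0 (big_morph _ (@tofracD A) (@tofrac0 A)); apply/eqP.
  transitivity (p.[w] * (f%:F ^+ N * g2%:F ^+ M)); last by rewrite pw0 mul0r.
  rewrite horner_coef mulr_suml; apply: eq_bigr => i _.
  rewrite (Hh i).2 /t !tofracM !tofracXn !tofracM; symmetry; apply: genInj => //; try nz.
  exact: ltnW (ltn_ord i).
have t0 := dsum0 HG ginj Ht sum0.
apply/polyP => i; rewrite coef0; case: (ltnP i M) => iM; last by rewrite nth_default.
have := t0 (Ordinal iM); rewrite /t => /eqP.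
rewrite ?(mulf_eq0, expf_eq0, negbTE a0, negbTE g10, negbTE g20, andbF, orbF) => /eqP ha.
by have := (Hh (Ordinal iM)).2; rewrite /= => ->; rewrite ha tofrac0 mul0r.
Qed.

Lemma all_props :
    [/\ homogeneous G f, (exists b : A, f = alpha * b) & f != 0] /\
        (exists k : int, loc_hom G f k w) /\
        (exists u, loc f u /\ w * u = 1) /\
        (forall x, loc f x <->
           exists (p : {poly {fraction A}}) (m : nat),
             (forall i, loc0 G f p`_i) /\ x = p.[w] / w ^+ m) /\
        (forall p : {poly {fraction A}}, (forall i, loc0 G f p`_i) ->
           p.[w] = 0 -> p = 0).
Proof.
split; first by split; [exists df; exact: Hf | exists (g1 * g2) | exact: f0].
split.
  exists e, df; split; first exact: Hf.
  exists (alpha * (g1 * g1)), 1%N; split.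
    apply: Geq; first exact: (GM HG Ha (GM HG H1 H1)).
    rewrite Ee; ring.
  rewrite !tofracM; apply: genW; nz.
split; first by exists v; split; [exact: loc_v | apply: genWV; nz].
split; last exact: Repr_inj.
by move=> x; split; [exact: loc_Repr | exact: Repr_loc].
Qed.

End Loc.

Theorem lemma2p10 (A : idomainType) (G : int -> {pred A}) (alpha : A) :
  Zgrading G -> nontrivial_grading G ->
  homogeneous G alpha -> alpha != 0 ->
  exists (f : A) (w : {fraction A}),
    [/\ homogeneous G f, (exists b : A, f = alpha * b) & f != 0] /\
        (* w is a homogeneous unit of A_f *)
        (exists k : int, loc_hom G f k w) /\
        (exists v, loc f v /\ w * v = 1) /\
        (* A_f = (A_f)_0[w, w^-1] *)
        (forall x, loc f x <->
           exists (p : {poly {fraction A}}) (m : nat),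
             (forall i, loc0 G f p`_i) /\ x = p.[w] / w ^+ m) /\ (* the canonical map (A_f)_0[t, t^-1] -> A_f, t |-> w, is injective,
           hence an isomorphism with the Laurent polynomial ring *)
        (forall p : {poly {fraction A}}, (forall i, loc0 G f p`_i) ->
           p.[w] = 0 -> p = 0).
Proof.
move=> HG Hnt [da Ha] a0.
have [e [d1 [d2 [g1 [g2 [epos Ee [H1 g10] [H2 g20] Hmul]]]]]] := exists_e HG Hnt.
exists (alpha * (g1 * g2)), (tofrac g1 / tofrac g2).
exact: (all_props HG Ha a0 H1 g10 H2 g20 epos Ee Hmul).
Qed.
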